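(* Let $G$ be a finite group, $p>2$ a prime, and $n>0$ an integer with $\gcd(n,p)=1$. Then $P_e(G)\cong P_e(\mathbb{Z}_p\times\mathbb{Z}_p\times\mathbb{Z}_p\times\mathbb{Z}_n)$ if and only if $G\cong \mathbb{Z}_p\times\mathbb{Z}_p\times\mathbb{Z}_p\times\mathbb{Z}_n$ or $G\cong K\times\mathbb{Z}_n$, where $K$ is the unique non-abelian group of order $p^3$ and exponent $p$.
   Context: All groups are finite. $\mathbb{Z}_k$ denotes the cyclic group of order $k$. $K$ is the non-abelian group of order $p^3$ and exponent $p$, with presentation $\langle x,y,z \mid x^p=y^p=z^p=1,\ [x,y]=z,\ [x,z]=[y,z]=1\rangle$. For a group $X$, the enhanced power graph $P_e(X)$ is the simple graph with vertex set $X$ in which two distinct vertices $x,y$ are adjacent if and only if $\langle x,y\rangle$ is cyclic. *)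

(* Defs.v *)
From HB Require Import structures.
From mathcomp Require Import all_boot all_order all_algebra all_fingroup all_solvable.
Set Implicit Arguments.
Unset Strict Implicit.
Unset Printing Implicit Defensive.
Local Open Scope group_scope.

Definition epg_adj (gT : finGroupType) (x y : gT) : bool :=
  (x != y) && cyclic <<[set x; y]>>.

Definition epg_isomorphic (gT hT : finGroupType) (G : {set gT}) (H : {set hT}) : Prop :=
  exists f : gT -> hT,
    [/\ {in G &, injective f}, f @: G = H &
        {in G &, forall x y, epg_adj x y = epg_adj (f x) (f y)}].

(* Z_k as the group Zp k (of order k for k > 0; 'Z_k alone is wrong for k = 1). *)
Definition Zppp_n (p n : nat) : {group ('Z_p * 'Z_p * 'Z_p * 'Z_n)%type} :=
  setX_group (setX_group (setX_group (Zp_group p) (Zp_group p)) (Zp_group p)) (Zp_group n).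

(* K x Z_n, with K = p^{1+2} the extraspecial group of order p^3
   (of exponent p for odd p), from mathcomp's extraspecial.v *)
Definition K_n (p n : nat) : {group (p^{1+2} * 'Z_n)%type} :=
  setX_group [set: p^{1+2}]%G (Zp_group n).

(* Main.v *)
Require Import Defs.
From HB Require Import structures.
From mathcomp Require Import all_boot all_order all_algebra all_fingroup all_solvable.
Set Implicit Arguments.
Unset Strict Implicit.
Unset Printing Implicit Defensive.
Local Open Scope group_scope.
Section Gen.
Variable gT : finGroupType.
Implicit Types (x y a b : gT) (P D G : {group gT}).

Lemma gen2_subG x y (H : {group gT}) :
  (<<[set x; y]>> \subset H) = (x \in H) && (y \in H).
Proof. by rewrite gen_subG subUset !sub1set. Qed.

Lemma cyc_same x : cyclic <<[set x; x]>>.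
Proof. by rewrite setUid cycle_cyclic. Qed.

Lemma dprod_parts p P D G x : prime p -> P \x D = G -> p.-group P ->
  p^'.-group D -> x \in G -> x.`_p \in P /\ x.`_p^' \in D.
Proof.
move=> pr dG pP pD Gx.
have [a [d [Pa Dd -> _]]] := mem_dprod dG Gx.
have cad : commute a d.
  case/dprodP: dG => _ _ cPD _.
  have := (centsP cPD) d Dd a Pa. move=> h. exact: (commute_sym h).
have pa := mem_p_elt pP Pa; have pd := mem_p_elt pD Dd.
have d1 : d.`_p = 1 by apply/constt1P.
have a1 : a.`_p^' = 1 by apply/constt1P; rewrite p_eltNK.
rewrite !consttM // (constt_p_elt pa) d1 mulg1 a1 mul1g (constt_p_elt pd).
by [].
Qed.

Lemma adj_char p P D G x y : prime p -> P \x D = G -> p.-group P ->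
  p^'.-group D -> cyclic D -> x \in G -> y \in G ->
  cyclic <<[set x; y]>> = cyclic <<[set x.`_p; y.`_p]>>.
Proof.
move=> pr dG pP pD cD Gx Gy.
have [Px Dx] := dprod_parts pr dG pP pD Gx.
have [Py Dy] := dprod_parts pr dG pP pD Gy.
apply/idP/idP => cyc.
  apply: cyclicS cyc; rewrite gen2_subG.
  have sx : <[x]> \subset <<[set x; y]>> by rewrite cycle_subG mem_gen // !inE eqxx.
  have sy : <[y]> \subset <<[set x; y]>> by rewrite cycle_subG mem_gen // !inE eqxx orbT.
  by rewrite (subsetP sx _ (cycle_constt _ _)) (subsetP sy _ (cycle_constt _ _)).
set K := <<[set x.`_p; y.`_p]>>%G; set L := <<[set x.`_p^'; y.`_p^']>>%G.
have sKP : K \subset P by rewrite gen2_subG Px.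
have sLD : L \subset D by rewrite gen2_subG Dx.
have cPD : D \subset 'C(P) by case/dprodP: dG.
apply: (@cyclicS _ (K <*> L)); last first.
  apply: cyclicY => //.
  - exact: cyclicS cD.
  - exact: subset_trans sLD (subset_trans cPD (centS sKP)).
  - exact: pnat_coprime (pgroupS sKP pP) (pgroupS sLD pD).
have jK : K \subset K <*> L := joing_subl _ _.
have jL : L \subset K <*> L := joing_subr _ _.
have xK : x.`_p \in K by rewrite mem_gen // !inE eqxx.
have yK : y.`_p \in K by rewrite mem_gen // !inE eqxx orbT.
have xL : x.`_p^' \in L by rewrite mem_gen // !inE eqxx.
have yL : y.`_p^' \in L by rewrite mem_gen // !inE eqxx orbT.
rewrite gen2_subG.
have := groupM (subsetP jK _ xK) (subsetP jL _ xL); rewrite consttC => ->.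
have := groupM (subsetP jK _ yK) (subsetP jL _ yL); rewrite consttC => ->.
by [].
Qed.
End Gen.
Section Gen2.
Variable gT : finGroupType.
Implicit Types (x y a b : gT) (P D G : {group gT}).

Lemma order_dvd_exp p P a : exponent P %| p -> a \in P -> #[a] %| p.
Proof. by move=> eP Pa; rewrite order_dvdn (exponentP eP). Qed.

Lemma order_expp p P a : prime p -> exponent P %| p -> a \in P -> a != 1 -> #[a] = p.
Proof.
move=> pr eP Pa na; apply/(prime_nt_dvdP pr); first by rewrite order_eq1.
exact: order_dvd_exp eP Pa.
Qed.

Lemma cyc_expp p P a b : prime p -> exponent P %| p -> a \in P -> b \in P ->
  cyclic <<[set a; b]>> = (a \in <[b]>) || (b \in <[a]>).
Proof.
move=> pr eP Pa Pb; apply/idP/idP.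
  case/cyclicP => c defC.
  have sCP : <<[set a; b]>> \subset P by rewrite gen2_subG Pa.
  have Pc : c \in P by apply: (subsetP sCP); rewrite defC cycle_id.
  case: (eqVneq a 1) => [-> | na]; first by rewrite group1.
  apply/orP; right.
  have sa : <[a]> \subset <[c]> by rewrite -defC cycle_subG mem_gen // !inE eqxx.
  have -> : <[a]> = <[c]>.
    apply/eqP; rewrite eqEcard sa -!orderE (order_expp pr eP Pa na).
    by rewrite dvdn_leq ?prime_gt0 // (order_dvd_exp eP Pc).
  by rewrite -defC mem_gen // !inE eqxx orbT.
case/orP => h.
  apply: (@cyclicS _ <[b]>); last exact: cycle_cyclic.
  by rewrite gen2_subG h cycle_id.
apply: (@cyclicS _ <[a]>); last exact: cycle_cyclic.
by rewrite gen2_subG h cycle_id.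
Qed.
End Gen2.
Definition Nb (gT : finGroupType) (G : {set gT}) (x : gT) :=
  [set y in G | cyclic <<[set x; y]>>].
Definition clique (gT : finGroupType) (S : {set gT}) :=
  {in S &, forall y z, cyclic <<[set y; z]>>}.
Definition Dom (gT : finGroupType) (G : {set gT}) :=
  [set x in G | #|Nb G x| == #|G|].
Definition Sprop (gT : finGroupType) (p n : nat) (G : {group gT}) :=
  exists P D : {group gT},
    [/\ P \x D = G, #|P| = (p ^ 3)%N, exponent P %| p, #|D| = n & cyclic D].

Section Gen3.
Variable gT : finGroupType.
Implicit Types (x y a b : gT) (P D G H : {group gT}).

Lemma cyc1 a : cyclic <<[set 1; a]>>.
Proof.
apply: (@cyclicS _ <[a]>); last exact: cycle_cyclic.
by rewrite gen2_subG group1 cycle_id.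
Qed.

Lemma constt_mul p P D G c d : P \x D = G -> p.-group P ->
  p^'.-group D -> c \in P -> d \in D -> (c * d).`_p = c.
Proof.
move=> dG pP pD Pc Dd.
have ccd : commute c d.
  case/dprodP: dG => _ _ cPD _.
  have := (centsP cPD) d Dd c Pc. move=> h. exact: (commute_sym h).
have pc := mem_p_elt pP Pc; have pd := mem_p_elt pD Dd.
have d1 : d.`_p = 1 by apply/constt1P.
by rewrite consttM // (constt_p_elt pc) d1 mulg1.
Qed.

Lemma S_groups p n P D G : prime p -> coprime n p -> P \x D = G ->
  #|P| = (p ^ 3)%N -> #|D| = n -> p.-group P /\ p^'.-group D.
Proof.
move=> pr cnp dG cP cD; split.
  by rewrite /pgroup cP pnatX pnat_id.
by rewrite /pgroup cD p'natE // -prime_coprime // coprime_sym.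
Qed.

Lemma S_graph p n H : prime p -> 0 < n -> coprime n p -> Sprop p n H ->
  [/\ #|H| = (p ^ 3 * n)%N, #|Dom H| = n &
    {in H, forall v, #|Nb H v| != #|H| -> #|Nb H v| = (p * n)%N /\ clique (Nb H v)}].
Proof.
move=> pr n0 cnp [P [D [dG cP eP cD cycD]]].
have [pP pD] := S_groups pr cnp dG cP cD.
have cH : #|H| = (p ^ 3 * n)%N by rewrite -(dprod_card dG) cP cD.
have [sPH sDH] : P \subset H /\ D \subset H.
  by case/dprodP: (dG) => _ <- _ _; rewrite mulG_subl ?mulG_subr.
have memD v : v \in H -> (v \in D) = (v.`_p == 1).
  move=> Hv; apply/idP/eqP => [Dv | v1].
    by apply/constt1P; apply: mem_p_elt pD Dv.
  have [_ Dv] := dprod_parts pr dG pP pD Hv.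
  by rewrite -(consttC p v) v1 mul1g.
have NbD v : v \in H -> v.`_p = 1 -> Nb H v = H.
  move=> Hv v1; apply/setP => w; rewrite inE.
  case Hw: (w \in H) => //=.
  by rewrite (adj_char pr dG pP pD cycD Hv Hw) v1 cyc1.
have memNb v w : v \in H -> v.`_p != 1 -> (w \in Nb H v) = (w \in H) && (w.`_p \in <[v.`_p]>).
  move=> Hv nv; rewrite inE; case Hw: (w \in H) => //=.
  have [Pv _] := dprod_parts pr dG pP pD Hv.
  have [Pw _] := dprod_parts pr dG pP pD Hw.
  rewrite (adj_char pr dG pP pD cycD Hv Hw) (cyc_expp pr eP Pv Pw).
  apply/orP/idP => [[h|h] //| h]; last by right.
  have nw : w.`_p != 1.
    by apply: contra nv => /eqP w1; move: h; rewrite w1 cycle1 inE.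
  have -> : <[v.`_p]> = <[w.`_p]>.
    apply/eqP; rewrite eqEcard cycle_subG h -!orderE.
    by rewrite (order_expp pr eP Pv nv) (order_expp pr eP Pw nw) leqnn.
  exact: cycle_id.
have NbP v : v \in H -> v.`_p != 1 -> Nb H v = <[v.`_p]> * D.
  move=> Hv nv; have [Pv _] := dprod_parts pr dG pP pD Hv.
  have sVP : <[v.`_p]> \subset P by rewrite cycle_subG.
  apply/setP => w; rewrite memNb //; apply/andP/idP => [[Hw Vw] | ].
    have [_ Dw] := dprod_parts pr dG pP pD Hw.
    by rewrite -(consttC p w) mem_mulg.
  case/mulsgP => c d Vc Dd ->.
  have Pc := subsetP sVP c Vc.
  rewrite (constt_mul dG pP pD Pc Dd) Vc; split => //.
  by apply: groupM; [apply: (subsetP sPH) | apply: (subsetP sDH)].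
have cardNb v : v \in H -> v.`_p != 1 -> #|Nb H v| = (p * n)%N.
  move=> Hv nv; have [Pv _] := dprod_parts pr dG pP pD Hv.
  rewrite NbP // TI_cardMg ?cD -?orderE ?(order_expp pr eP Pv nv) //.
  apply: coprime_TIg; rewrite -orderE (order_expp pr eP Pv nv) cD coprime_sym //.
have domE : Dom H = D.
  apply/setP => v; rewrite inE.
  case Hv: (v \in H); last by apply/esym/negbTE; apply: contraFN Hv; apply: (subsetP sDH).
  rewrite /= memD //.
  case: (eqVneq v.`_p 1) => [v1 | nv]; first by rewrite NbD // eqxx.
  rewrite cardNb // cH; apply/negbTE.
  have p1 := prime_gt1 pr.
  rewrite eqn_pmul2r //; apply/negP => /eqP e.
  have : (p ^ 1 < p ^ 3)%N by rewrite ltn_exp2l.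
  by rewrite expn1 -e ltnn.
split => //; first by rewrite domE.
move=> v Hv neq.
have nv : v.`_p != 1 by apply: contra neq => /eqP v1; rewrite NbD // eqxx.
split; first exact: cardNb.
move=> w1 w2; rewrite !memNb // => /andP [H1 V1] /andP [H2 V2].
rewrite (adj_char pr dG pP pD cycD H1 H2).
apply: (@cyclicS _ <[v.`_p]>); last exact: cycle_cyclic.
by rewrite gen2_subG V1.
Qed.
End Gen3.
Lemma cyc_adj (gT : finGroupType) (x y : gT) :
  cyclic <<[set x; y]>> = (x == y) || epg_adj x y.
Proof.
case: (eqVneq x y) => [-> | ne]; first by rewrite cyc_same.
by rewrite /epg_adj ne.
Qed.

Lemma Nb_sub (gT : finGroupType) (G : {set gT}) x : Nb G x \subset G.
Proof. by apply/subsetP => y; rewrite inE => /andP []. Qed.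

Lemma transfer (gT hT : finGroupType) (G : {group gT}) (H : {group hT}) :
  epg_isomorphic G H ->
  [/\ #|G| = #|H|, #|Dom G| = #|Dom H| &
    {in G, forall x, exists2 v, v \in H &
      #|Nb G x| = #|Nb H v| /\ (clique (Nb H v) -> clique (Nb G x))}].
Proof.
case=> f [inj im pres].
have cycP : {in G &, forall y z, cyclic <<[set y; z]>> = cyclic <<[set f y; f z]>>}.
  by move=> y z Gy Gz; rewrite !cyc_adj pres // (inj_in_eq inj).
have fG y : y \in G -> f y \in H by move=> Gy; rewrite -im imset_f.
have cGH : #|G| = #|H| by rewrite -im card_in_imset.
have NbI x : x \in G -> f @: Nb G x = Nb H (f x).
  move=> Gx; apply/setP => w; apply/imsetP/idP.
    by case=> y; rewrite inE => /andP [Gy cy] ->; rewrite inE fG // -cycP.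
  rewrite inE => /andP [Hw cw].
  move: Hw; rewrite -im => /imsetP [y Gy wE].
  by exists y => //; rewrite inE Gy cycP // -wE.
have cNb x : x \in G -> #|Nb G x| = #|Nb H (f x)|.
  move=> Gx; rewrite -NbI // card_in_imset //.
  by move=> a b /(subsetP (Nb_sub G x)) Ha /(subsetP (Nb_sub G x)) Hb; apply: inj.
split => //.
  have -> : Dom H = f @: Dom G.
    apply/setP => w; apply/idP/imsetP.
      rewrite inE => /andP [Hw cw].
      move: Hw; rewrite -im => /imsetP [y Gy wE].
      by exists y => //; rewrite inE Gy cNb // -wE cGH.
    case=> y; rewrite inE => /andP [Gy cy] ->.
    by rewrite inE fG // -cNb // -cGH.
  rewrite card_in_imset //.
  by move=> a b; rewrite !inE => /andP [Ha _] /andP [Hb _]; apply: inj.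
move=> x Gx; exists (f x); first exact: fG.
split; first exact: cNb.
move=> cl y z Ny Nz.
have Gy := subsetP (Nb_sub G x) y Ny; have Gz := subsetP (Nb_sub G x) z Nz.
rewrite cycP //; apply: cl; rewrite -NbI //; exact: imset_f.
Qed.
Section Struct.
Variable gT : finGroupType.
Implicit Types (x y a b : gT) (P D G H : {group gT}).

Lemma cyc_in a b c : a \in <[c]> -> b \in <[c]> -> cyclic <<[set a; b]>>.
Proof.
move=> ac bc; apply: (@cyclicS _ <[c]>); last exact: cycle_cyclic.
by rewrite gen2_subG ac.
Qed.

Lemma cyc_sym a b : cyclic <<[set a; b]>> = cyclic <<[set b; a]>>.
Proof. by rewrite setUC. Qed.

Lemma cyc_commute a b : cyclic <<[set a; b]>> -> commute a b.
Proof.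
move/cyclic_abelian => ab.
have Aa : a \in <<[set a; b]>> by rewrite mem_gen // !inE eqxx.
have Ab : b \in <<[set a; b]>> by rewrite mem_gen // !inE eqxx orbT.
exact: (centsP ab) a Aa b Ab.
Qed.

Lemma clique_cyclic G x : x \in G -> clique (Nb G x) ->
  exists2 y, y \in G & Nb G x = <[y]>.
Proof.
move=> Gx cl.
have Nx : x \in Nb G x by rewrite inE Gx cyc_same.
have [y Ny ymax] := @arg_maxnP _ x (mem (Nb G x)) (fun z => #[z]) Nx.
have Gy := subsetP (Nb_sub G x) y Ny.
have eqU u : u \in Nb G x -> y \in <[u]> -> <[u]> = <[y]>.
  move=> Nu yu; apply/esym/eqP; rewrite eqEcard cycle_subG yu -!orderE.
  exact: ymax u Nu.
have genU z : z \in Nb G x -> exists u, [/\ u \in G, <<[set z; y]>> = <[u]>,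
    z \in <[u]> & y \in <[u]>].
  move=> Nz; have /cyclicP [u du] := cl z y Nz Ny.
  have Gz := subsetP (Nb_sub G x) z Nz.
  have sG : <<[set z; y]>> \subset G by rewrite gen2_subG Gz.
  exists u; split => //.
  - by apply: (subsetP sG); rewrite du cycle_id.
  - by rewrite -du mem_gen // !inE eqxx.
  - by rewrite -du mem_gen // !inE eqxx orbT.
have xy : x \in <[y]>.
  have [u [Gu du xu yu]] := genU x Nx.
  have Nu : u \in Nb G x by rewrite inE Gu (cyc_in xu (cycle_id u)).
  by rewrite -(eqU u Nu yu).
exists y => //; apply/setP => z; apply/idP/idP => [Nz | zy].
  have [u [Gu du zu yu]] := genU z Nz.
  have xu : x \in <[u]> by apply: (subsetP (_ : <[y]> \subset <[u]>)); rewrite ?cycle_subG.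
  have Nu : u \in Nb G x by rewrite inE Gu (cyc_in xu (cycle_id u)).
  by rewrite -(eqU u Nu yu).
rewrite inE (cyc_in xy zy) andbT.
by apply: (subsetP (_ : <[y]> \subset G)); rewrite ?cycle_subG.
Qed.

Lemma NbG_full G x : x \in G -> (#|Nb G x| == #|G|) = (Nb G x == G).
Proof. by move=> Gx; rewrite eqEcard Nb_sub /= eqn_leq subset_leq_card ?Nb_sub. Qed.

Lemma structure p n G : prime p -> 0 < n -> coprime n p ->
  #|G| = (p ^ 3 * n)%N -> #|Dom G| = n ->
  {in G, forall x, #|Nb G x| != #|G| -> #|Nb G x| = (p * n)%N /\ clique (Nb G x)} ->
  Sprop p n G.
Proof.
move=> pr n0 cnp cG cD hN.
have p1 := prime_gt1 pr; have p0 := prime_gt0 pr.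
have domP d w : d \in Dom G -> w \in G -> cyclic <<[set d; w]>>.
  rewrite inE => /andP [Gd]; rewrite NbG_full // => /eqP NG Gw.
  by move: Gw; rewrite -{1}NG inE => /andP [].
have ndom x : x \in G -> x \notin Dom G ->
    exists2 y, y \in G & Nb G x = <[y]> /\ #[y] = (p * n)%N.
  move=> Gx nd; have [cN cl] : #|Nb G x| = (p * n)%N /\ clique (Nb G x).
    by apply: hN => //; apply: contra nd => e; rewrite inE Gx e.
  have [y Gy Ny] := clique_cyclic Gx cl.
  by exists y => //; split => //; rewrite orderE -Ny.
have [x0 Gx0 nx0] : exists2 x0, x0 \in G & x0 \notin Dom G.
  apply/subsetPn; apply/negP => sGD.
  have := subset_leq_card sGD; rewrite cG cD.
  rewrite -{2}(mul1n n) leq_pmul2r // leqNgt.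
  have h : (1 < p ^ 3)%N by rewrite -(exp1n 3) ltn_exp2r.
  by rewrite h.
have [y0 Gy0 [Ny0 oy0]] := ndom x0 Gx0 nx0.
have sDy0 : Dom G \subset <[y0]>.
  apply/subsetP => d Dd; have Gd : d \in G by move: Dd; rewrite inE => /andP [].
  by rewrite -Ny0 inE Gd cyc_sym domP.
have ord z : z \in G -> #[z] %| p * n.
  move=> Gz; case Dz: (z \in Dom G).
    by rewrite -oy0 orderE [#[y0]]orderE cardSg // cycle_subG (subsetP sDy0).
  have [y Gy [Ny oy]] := ndom z Gz (negbT Dz).
  have zy : z \in <[y]> by rewrite -Ny inE Gz cyc_same.
  by rewrite -oy orderE [#[y]]orderE cardSg // cycle_subG.
have sDG : Dom G \subset G by apply/subsetP => d; rewrite inE => /andP [].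
have gsD : group_set (Dom G).
  apply/andP; split.
    rewrite inE group1 NbG_full //; apply/eqP/setP => w; rewrite inE.
    by case Gw: (w \in G); rewrite //= cyc1.
  apply/subsetP => _ /mulsgP [d e Dd De ->].
  have Gd := subsetP sDG d Dd; have Ge := subsetP sDG e De.
  have Gde : d * e \in G by rewrite groupM.
  rewrite inE Gde NbG_full //; apply/eqP/setP => w; rewrite inE.
  case Gw: (w \in G) => //=.
  case Dw: (w \in Dom G).
    by apply: (@cyc_in _ _ y0); rewrite ?groupM ?(subsetP sDy0).
  have [y Gy [Ny _]] := ndom w Gw (negbT Dw).
  have dy : d \in <[y]> by rewrite -Ny inE Gd cyc_sym domP.
  have ey : e \in <[y]> by rewrite -Ny inE Ge cyc_sym domP.
  by apply: (@cyc_in _ _ y); rewrite ?groupM // -Ny inE Gw cyc_same.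
pose DG := Group gsD.
have cDG : DG \subset 'C(G).
  apply/centsP => d Dd g Gg; exact: cyc_commute (domP d g Dd Gg).
have [P sylP] := Sylow_exists p G.
have sPG := pHall_sub sylP; have pP := pHall_pgroup sylP.
have p'n : p^'.-nat n by rewrite p'natE // -prime_coprime // coprime_sym.
have cP : #|P| = (p ^ 3)%N.
  rewrite (card_Hall sylP) cG partnM ?expn_gt0 ?p0 //.
  by rewrite (part_p'nat p'n) muln1 part_pnat_id // pnatX pnat_id.
have eP : exponent P %| p.
  apply/exponentP => z Pz; apply/eqP; rewrite -order_dvdn.
  have cz : coprime #[z] n by apply: pnat_coprime (mem_p_elt pP Pz) p'n.
  by rewrite -(Gauss_dvdl p cz) ord // (subsetP sPG).
have TI : P :&: DG = 1.
  by apply: coprime_TIg; rewrite cP /= cD coprimeXl // coprime_sym.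
have dG : P \x DG = G.
  rewrite dprodE //; last exact: subset_trans cDG (centS sPG).
  apply/eqP; rewrite eqEcard mul_subG //= (TI_cardMg TI) cP cD cG leqnn //.
rewrite /Sprop; exists P; exists DG; split => //.
exact: (@cyclicS _ <[y0]>%G DG sDy0 (cycle_cyclic y0)).
Qed.
End Struct.
Section Prod.
Variables gT hT : finGroupType.

Lemma pair_expg (a : gT) (b : hT) k : ((a, b) : gT * hT) ^+ k = (a ^+ k, b ^+ k).
Proof.
elim: k => [|k IH]; first by [].
by rewrite !expgS IH.
Qed.

Lemma exponentX (A : {group gT}) (B : {group hT}) m :
  exponent A %| m -> exponent B %| m -> exponent (setX A B) %| m.
Proof.
move=> eA eB; apply/exponentP => [[a b]]; rewrite in_setX => /andP [Aa Bb].
by rewrite pair_expg (exponentP eA) // (exponentP eB).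
Qed.

Lemma abelianX (A : {group gT}) (B : {group hT}) :
  abelian A -> abelian B -> abelian (setX A B).
Proof.
move=> cA cB; apply/centsP => [[a b]]; rewrite in_setX => /andP [Aa Bb].
move=> [c d]; rewrite in_setX => /andP [Ac Bd].
rewrite /commute /=.
have e1 : a * c = c * a := (centsP cA) a Aa c Ac.
have e2 : b * d = d * b := (centsP cB) b Bb d Bd.
by congr (_, _).
Qed.
End Prod.

Lemma Zp_cyclic n : cyclic (Zp n).
Proof.
rewrite /Zp; case: ifP => _; last exact: cyclic1.
rewrite Zp_cycle; exact: cycle_cyclic.
Qed.

Lemma exponent_Zp p : 0 < p -> exponent (Zp p) %| p.
Proof.
move=> p0; apply: dvdn_trans (exponent_dvdn _) _.
by rewrite card_Zp.
Qed.

Lemma abelian_Zp p : abelian (Zp p).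
Proof. rewrite /Zp; case: ifP => _; [exact: Zp_abelian | exact: abelian1]. Qed.

Lemma Sprop_Zppp p n : prime p -> 0 < n -> Sprop p n (Zppp_n p n).
Proof.
move=> pr n0; have p0 := prime_gt0 pr.
set A := setX_group (setX_group (Zp_group p) (Zp_group p)) (Zp_group p).
exists (setX_group A 1%G), (setX_group 1%G (Zp_group n)); split.
- exact: setX_dprod.
- rewrite /= cardsX cards1 muln1 !cardsX !card_Zp //; by rewrite !expnS expn0 muln1 mulnA.
- apply: exponentX; last by rewrite exponent1 dvd1n.
  by apply: exponentX; [apply: exponentX|]; apply: exponent_Zp.
- by rewrite /= cardsX cards1 mul1n card_Zp.
- by rewrite /= -(isog_cyclic (@isog_set1X _ _ (Zp_group n))) Zp_cyclic.
Qed.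

Lemma Sprop_Kn p n : prime p -> 2 < p -> 0 < n -> Sprop p n (K_n p n).
Proof.
move=> pr p2 n0; have p0 := prime_gt0 pr.
have op : odd p by case: (even_prime pr) => // e; rewrite e in p2.
exists (setX_group [set: p^{1+2}]%G 1%G), (setX_group 1%G (Zp_group n)); split.
- exact: setX_dprod.
- by rewrite /= cardsX cards1 muln1 card_pX1p2.
- apply: exponentX; last by rewrite exponent1 dvd1n.
  exact: exponent_pX1p2.
- by rewrite /= cardsX cards1 mul1n card_Zp.
- by rewrite /= -(isog_cyclic (@isog_set1X _ _ (Zp_group n))) Zp_cyclic.
Qed.

Lemma Sprop_isog (gT hT : finGroupType) p n (G : {group gT}) (X : {group hT}) :
  G \isog X -> Sprop p n X -> Sprop p n G.
Proof.
rewrite isog_sym => /isogP [f injf imf] [P [D [dX cP eP cD cycD]]].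
have [sPX sDX] : P \subset X /\ D \subset X.
  by case/dprodP: (dX) => _ <- _ _; rewrite mulG_subl ?mulG_subr.
exists (f @* P)%G, (f @* D)%G; split.
- by rewrite -imf; apply: injm_dprod.
- by rewrite card_injm.
- by rewrite exponent_injm.
- by rewrite card_injm.
- by rewrite injm_cyclic.
Qed.

Lemma classify (gT : finGroupType) p n (G : {group gT}) :
  prime p -> 2 < p -> 0 < n -> coprime n p -> Sprop p n G ->
  G \isog Zppp_n p n \/ G \isog K_n p n.
Proof.
move=> pr p2 n0 cnp [P [D [dG cP eP cD cycD]]].
have p0 := prime_gt0 pr.
have [pP pD] := S_groups pr cnp dG cP cD.
have isoD (T : finGroupType) : D \isog setX_group [1 T]%G (Zp_group n).
  apply: isog_trans (@isog_set1X T _ (Zp_group n)).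
  by rewrite (isog_cyclic_card (Zp_group n) cycD) Zp_cyclic card_Zp // cD eqxx.
case: (boolP (abelian P)) => [ab | nab]; [left | right].
  rewrite /Zppp_n.
  set A := setX_group (setX_group (Zp_group p) (Zp_group p)) (Zp_group p).
  apply: (isog_dprod dG (setX_dprod A (Zp_group n))); last exact: isoD.
  apply: isog_trans (@isog_setX1 _ _ A).
  have abP : p.-abelem P by rewrite abelemE // ab eP.
  rewrite (isog_abelem_card _ abP) abelemE //.
  rewrite !abelianX ?abelian_Zp //=.
  rewrite !exponentX ?exponent_Zp //=.
  rewrite !cardsX !card_Zp // cP.
  by rewrite !expnS expn0 muln1 mulnA.
rewrite /K_n.
apply: (isog_dprod dG (setX_dprod _ (Zp_group n))); last exact: isoD.
apply: isog_trans (@isog_setX1 _ _ _).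
apply: isog_pX1p2 => //.
by apply: (@p3group_extraspecial p) => //; rewrite cP pfactorK.
Qed.
Section ExpP.
Variable gT : finGroupType.
Variable p : nat.
Hypothesis pr : prime p.
Variable P : {group gT}.
Hypothesis eP : exponent P %| p.

Lemma memcyc a b : a \in P -> b \in P -> a != 1 ->
  (a \in <[b]>) = (<[a]> == <[b]>).
Proof.
move=> Pa Pb na; apply/idP/idP => [ab | /eqP e]; last by rewrite -e cycle_id.
have nb : b != 1 by apply: contra na => /eqP b1; move: ab; rewrite b1 cycle1 inE.
rewrite eqEcard cycle_subG ab -!orderE (order_expp pr eP Pa na).
by rewrite (order_expp pr eP Pb nb) leqnn.
Qed.

Definition SP := [set <[x]> | x in P :\ 1].

Lemma SP_gen A : A \in SP -> exists2 x, x \in P :\ 1 & A = <[x]>.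
Proof. by case/imsetP => x Px ->; exists x. Qed.

Definition gen (A : {set gT}) := repr (A :\ 1).

Lemma genP A : A \in SP -> [/\ gen A \in P, gen A != 1 & <[gen A]> = A].
Proof.
case/SP_gen => x; rewrite in_setD1 => /andP [nx Px] ->.
have xA : x \in <[x]> :\ 1 by rewrite in_setD1 nx cycle_id.
have := mem_repr _ xA; rewrite -/(gen _) in_setD1 => /andP [ng gx].
have Pg : gen <[x]> \in P by apply: (subsetP (_ : <[x]> \subset P)); rewrite ?cycle_subG.
split => //; apply/eqP; rewrite -memcyc //.
Qed.

Lemma card_SP : #|P :\ 1| = (#|SP| * p.-1)%N.
Proof.
rewrite -sum1_card (partition_big_imset (fun x => <[x]>)) /= -/SP.
rewrite -sum_nat_const; apply: eq_bigr => A SPA.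
have [x Px ->] := SP_gen SPA.
move: Px; rewrite in_setD1 => /andP [nx Px].
have -> : \sum_(i in P :\ 1 | <[i]> == <[x]>) 1 = #|<[x]> :\ 1|.
  rewrite -sum1_card; apply: eq_bigl => y.
  rewrite !in_setD1 andbAC; case ny: (y != 1) => //=.
  case Py: (y \in P) => /=; first by rewrite andbT memcyc ?ny.
  rewrite andbF; apply/esym/negbTE; apply: contraFN Py => yx.
  by apply: (subsetP (_ : <[x]> \subset P)); rewrite ?cycle_subG.
have := cardsD1 1 <[x]>; rewrite group1 -orderE (order_expp pr eP Px nx).
by case: p pr => // q _ ->.
Qed.
End ExpP.
Section Phi.
Variables gT hT : finGroupType.
Variable p : nat.
Hypothesis pr : prime p.
Variable P : {group gT}.
Variable Q : {group hT}.
Hypothesis eP : exponent P %| p.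
Hypothesis eQ : exponent Q %| p.
Hypothesis cPQ : #|P| = #|Q|.

Definition sigma (A : {set gT}) : {set hT} :=
  nth 1 (enum (SP Q)) (index A (enum (SP P))).

Lemma card_SPQ : #|SP P| = #|SP Q|.
Proof.
have p1 := prime_gt1 pr.
have e : #|P :\ 1| = #|Q :\ 1|.
  by move: (cardsD1 1 P) (cardsD1 1 Q); rewrite !group1 cPQ => -> [].
move: e; rewrite (card_SP pr eP) (card_SP pr eQ) => /eqP.
rewrite eqn_pmul2r; first by move/eqP.
by case: p p1 => [|[|q]].
Qed.

Lemma sigma_in A : A \in SP P -> sigma A \in SP Q.
Proof.
move=> SA; rewrite /sigma -mem_enum mem_nth // -cardE -card_SPQ cardE.
by rewrite index_mem mem_enum.
Qed.

Lemma sigma_inj A B : A \in SP P -> B \in SP P -> sigma A = sigma B -> A = B.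
Proof.
move=> SA SB /eqP; rewrite /sigma nth_uniq ?enum_uniq //; first last.
- by rewrite -cardE -card_SPQ cardE index_mem mem_enum.
- by rewrite -cardE -card_SPQ cardE index_mem mem_enum.
move=> /eqP e.
by rewrite -(nth_index A (_ : A \in enum (SP P))) ?mem_enum // e nth_index ?mem_enum.
Qed.

Definition kidx (x : gT) := index x (mkseq (fun i => gen <[x]> ^+ i) p).

Definition phi (x : gT) : hT :=
  if x == 1 then 1 else gen (sigma <[x]>) ^+ kidx x.

Lemma SP_cyc x : x \in P -> x != 1 -> <[x]> \in SP P.
Proof. by move=> Px nx; apply: imset_f; rewrite in_setD1 nx. Qed.

Lemma kP x : x \in P -> x != 1 -> [/\ 0 < kidx x, kidx x < p & gen <[x]> ^+ kidx x = x].
Proof.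
move=> Px nx; have [Pg ng eg] := genP pr eP (SP_cyc Px nx).
have og : #[gen <[x]>] = p by apply: order_expp pr eP Pg ng.
have xs : x \in mkseq (fun i => gen <[x]> ^+ i) p.
  have [i ei] : exists i, x = gen <[x]> ^+ i by apply/cycleP; rewrite eg cycle_id.
  rewrite [X in X \in _]ei -expg_mod_order og.
  rewrite /mkseq; apply: (map_f (fun i => gen <[x]> ^+ i)).
  by rewrite mem_iota /= ltn_pmod ?prime_gt0.
have kp : kidx x < p by rewrite /kidx -{2}(size_mkseq (fun i => gen <[x]> ^+ i) p) index_mem.
have ek : gen <[x]> ^+ kidx x = x.
  by rewrite -(nth_mkseq 1 (fun i => gen <[x]> ^+ i) kp) nth_index.
split => //; rewrite lt0n; apply: contra nx => /eqP k0.
by rewrite -ek k0 expg0.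
Qed.

Lemma phiP x : x \in P -> x != 1 ->
  [/\ phi x \in Q, phi x != 1 & <[phi x]> = sigma <[x]>].
Proof.
move=> Px nx; rewrite /phi (negbTE nx).
have [k0 kp _] := kP Px nx.
have SB := sigma_in (SP_cyc Px nx).
have [Qh nh eh] := genP pr eQ SB.
have oh : #[gen (sigma <[x]>)] = p by apply: order_expp pr eQ Qh nh.
have nhk : gen (sigma <[x]>) ^+ kidx x != 1.
  by rewrite -order_dvdn oh gtnNdvd.
have Qhk : gen (sigma <[x]>) ^+ kidx x \in Q by rewrite groupX.
split => //; rewrite -[RHS]eh; apply/eqP.
by rewrite -(memcyc pr eQ Qhk Qh nhk) mem_cycle.
Qed.

Lemma phi1 : phi 1 = 1.
Proof. by rewrite /phi eqxx. Qed.

Lemma phi_mem x : x \in P -> phi x \in Q.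
Proof.
move=> Px; case: (eqVneq x 1) => [-> | nx]; first by rewrite phi1 group1.
by case: (phiP Px nx).
Qed.

Lemma phi_eq1 x : x \in P -> (phi x == 1) = (x == 1).
Proof.
move=> Px; case: (eqVneq x 1) => [-> | nx]; first by rewrite phi1 eqxx.
by case: (phiP Px nx) => _ /negbTE ->.
Qed.

Lemma phi_inj : {in P &, injective phi}.
Proof.
move=> a b Pa Pb e.
case: (eqVneq a 1) => [a1 | na].
  by rewrite a1; apply/esym/eqP; rewrite -(phi_eq1 Pb) -e a1 phi1.
case: (eqVneq b 1) => [b1 | nb].
  by move: na; rewrite -(phi_eq1 Pa) e b1 phi1 eqxx.
have [_ _ ca] := phiP Pa na; have [_ _ cb] := phiP Pb nb.
have eAB : <[a]> = <[b]>.
  by apply: sigma_inj; rewrite ?SP_cyc // -ca -cb e.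
have [ka0 kap ea] := kP Pa na; have [kb0 kbp eb] := kP Pb nb.
move: e; rewrite /phi (negbTE na) (negbTE nb) eAB => /eqP.
have SB := sigma_in (SP_cyc Pb nb).
have [Qh nh eh] := genP pr eQ SB.
have oh : #[gen (sigma <[b]>)] = p by apply: order_expp pr eQ Qh nh.
rewrite eq_expg_mod_order oh !modn_small // => /eqP ek.
by rewrite -ea -eb eAB ek.
Qed.

Lemma phi_cyc a b : a \in P -> b \in P -> (a \in <[b]>) = (phi a \in <[phi b]>).
Proof.
move=> Pa Pb.
case: (eqVneq a 1) => [-> | na]; first by rewrite phi1 !group1.
have [Qa na' ca] := phiP Pa na.
case: (eqVneq b 1) => [b1 | nb].
  rewrite b1 phi1 !cycle1 !inE (negbTE na).
  by apply/esym/negbTE.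
have [Qb nb' cb] := phiP Pb nb.
rewrite (memcyc pr eP Pa Pb na) (memcyc pr eQ Qa Qb na') ca cb.
apply/eqP/eqP => [-> // | e].
by apply: sigma_inj; rewrite ?SP_cyc.
Qed.

Lemma phi_cyc2 a b : a \in P -> b \in P ->
  cyclic <<[set a; b]>> = cyclic <<[set phi a; phi b]>>.
Proof.
move=> Pa Pb.
rewrite (cyc_expp pr eP Pa Pb) (cyc_expp pr eQ (phi_mem Pa) (phi_mem Pb)).
by rewrite !phi_cyc.
Qed.
End Phi.
Lemma constt_mul2 (gT : finGroupType) p (P D G : {group gT}) c d : P \x D = G -> p.-group P ->
  p^'.-group D -> c \in P -> d \in D -> (c * d).`_p^' = d.
Proof.
move=> dG pP pD Pc Dd.
have ccd : commute c d.
  case/dprodP: dG => _ _ cPD _.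
  have := (centsP cPD) d Dd c Pc. move=> h. exact: (commute_sym h).
have pc := mem_p_elt pP Pc; have pd := mem_p_elt pD Dd.
have c1 : c.`_p^' = 1 by apply/constt1P; rewrite p_eltNK.
by rewrite consttM // (constt_p_elt pd) c1 mul1g.
Qed.

Lemma graph_iso (gT hT : finGroupType) p n (G : {group gT}) (H : {group hT}) :
  prime p -> 0 < n -> coprime n p -> Sprop p n G -> Sprop p n H ->
  epg_isomorphic G H.
Proof.
move=> pr n0 cnp [P [D [dG cP eP cD cycD]]] [Q [E [dH cQ eQ cE cycE]]].
have [pP pD] := S_groups pr cnp dG cP cD.
have [pQ pE] := S_groups pr cnp dH cQ cE.
have [sQH sEH] : Q \subset H /\ E \subset H.
  by case/dprodP: (dH) => _ <- _ _; rewrite mulG_subl ?mulG_subr.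
have isoDE : D \isog E by rewrite (isog_cyclic_card E cycD) cycE cE cD eqxx.
case/isogP: isoDE => psi injpsi impsi.
have psiE d : d \in D -> psi d \in E by move=> Dd; rewrite -impsi mem_morphim.
have psi_inj : {in D &, injective psi} by apply/injmP.
have cPQ : #|P| = #|Q| by rewrite cP cQ.
pose f x := phi p P Q x.`_p * psi x.`_p^'.
have fp x : x \in G -> (f x).`_p = phi p P Q x.`_p.
  move=> Gx; have [Px Dx] := dprod_parts pr dG pP pD Gx.
  exact: (constt_mul dH pQ pE (phi_mem pr eP eQ cPQ Px) (psiE _ Dx)).
have fp' x : x \in G -> (f x).`_p^' = psi x.`_p^'.
  move=> Gx; have [Px Dx] := dprod_parts pr dG pP pD Gx.
  exact: (constt_mul2 dH pQ pE (phi_mem pr eP eQ cPQ Px) (psiE _ Dx)).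
have fH x : x \in G -> f x \in H.
  move=> Gx; have [Px Dx] := dprod_parts pr dG pP pD Gx.
  apply: groupM; [apply: (subsetP sQH); exact: (phi_mem pr eP eQ cPQ Px) | apply: (subsetP sEH); exact: psiE].
have f_inj : {in G &, injective f}.
  move=> x y Gx Gy e.
  have [Px Dx] := dprod_parts pr dG pP pD Gx.
  have [Py Dy] := dprod_parts pr dG pP pD Gy.
  have e1 : x.`_p = y.`_p.
    apply: (phi_inj pr eP eQ cPQ Px Py).
    by rewrite -fp // -fp // e.
  have e2 : x.`_p^' = y.`_p^'.
    apply: psi_inj => //.
    by rewrite -fp' // -fp' // e.
  by rewrite -(consttC p x) -(consttC p y) e1 e2.
exists f; split => //.
  apply/eqP; rewrite eqEcard; apply/andP; split.
    by apply/subsetP => _ /imsetP [x Gx ->]; apply: fH.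
  by rewrite card_in_imset // -(dprod_card dG) -(dprod_card dH) cP cQ cD cE.
move=> x y Gx Gy.
rewrite /epg_adj (inj_in_eq f_inj) //.
rewrite (adj_char pr dG pP pD cycD Gx Gy) (adj_char pr dH pQ pE cycE (fH x Gx) (fH y Gy)).
have [Px _] := dprod_parts pr dG pP pD Gx.
have [Py _] := dprod_parts pr dG pP pD Gy.
by rewrite !fp // (phi_cyc2 pr eP eQ cPQ Px Py).
Qed.

Unset Implicit Arguments.

Theorem theorem8 (gT : finGroupType) (G : {group gT}) (p n : nat) :
  prime p -> 2 < p -> 0 < n -> coprime n p ->
  (epg_isomorphic G (Zppp_n p n) <-> (G \isog Zppp_n p n \/ G \isog K_n p n)).
Proof.
move=> pr p2 n0 cnp.
have SH := Sprop_Zppp pr n0.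
split.
  move=> iso; have [cGH cDom hN] := transfer iso.
  have [cH cDH hH] := S_graph pr n0 cnp SH.
  apply: classify => //; apply: structure => //.
  - by rewrite cGH.
  - by rewrite cDom.
  move=> x Gx nx; have [v Hv [ev cl]] := hN x Gx.
  have nv : #|Nb (Zppp_n p n) v| != #|Zppp_n p n| by rewrite -ev -cGH.
  have [cv clv] := hH v Hv nv.
  by split; [rewrite ev | apply: cl].
case=> iso.
  by apply: (graph_iso pr n0 cnp (Sprop_isog iso SH) SH).
by apply: (graph_iso pr n0 cnp (Sprop_isog iso (Sprop_Kn pr p2 n0)) SH).
Qed.
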